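(* Let $G$ be a Hausdorff compact topological monoid with neutral element $e$, and let $f:G\to G$ be a continuous mapping such that for each $x,y\in G$ and each neighbourhood $V$ of $e$ there exist $z\in G$ and $n\in\mathbb{N}$ with $f^n(x),f^n(y)\in zV$. Then $f$ has a unique fixed point.
   Context: A topological monoid is a semigroup with neutral element, equipped with a topology making multiplication jointly continuous. $zV=\{zv:v\in V\}$; $f^n$ is the $n$-fold iterate of $f$. *)

(* Defs.v *)
From HB Require Import structures.
From mathcomp Require Import all_boot all_order all_algebra.
From mathcomp Require Import all_classical all_reals all_analysis.
Set Implicit Arguments. Unset Strict Implicit. Unset Printing Implicit Defensive.
Local Open Scope classical_set_scope.

Definition topological_monoid (G : topologicalType) (mul : G -> G -> G) (e : G) : Prop :=
  [/\ forall x y z, mul x (mul y z) = mul (mul x y) z,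
      forall x, mul e x = x,
      forall x, mul x e = x &
      continuous (fun p : G * G => mul p.1 p.2)].

Definition lmul_set (G : Type) (mul : G -> G -> G) (z : G) (V : set G) : set G :=
  [set mul z v | v in V].

(* Main.v *)
Require Import Defs.
From mathcomp Require Import all_boot all_order all_algebra.
From mathcomp Require Import all_classical all_reals all_analysis.
Local Open Scope classical_set_scope.

Lemma mul_split (G : topologicalType) (mul : G -> G -> G) (z w : G) (A : set G) :
  continuous (fun p : G * G => mul p.1 p.2) -> nbhs (mul z w) A ->
  exists U1 U2, [/\ nbhs z U1, nbhs w U2 &
     forall a b, U1 a -> U2 b -> A (mul a b)].
Proof.
move=> hc hA.
have := hc (z, w) A hA.
move=> [[P Q] /= [hP hQ] sub].
exists P, Q; split => // a b Pa Qb.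
exact: (sub (a, b)).
Qed.

Lemma key (G : topologicalType) (mul : G -> G -> G) (e : G) (R : G -> G -> Prop) :
  continuous (fun p : G * G => mul p.1 p.2) ->
  (forall x, mul x e = x) ->
  compact [set: G] ->
  (forall V : set G, nbhs e V -> exists z a b,
      [/\ lmul_set mul z V a, lmul_set mul z V b & R a b]) ->
  exists z : G, forall A B : set G, nbhs z A -> nbhs z B ->
      exists a b, [/\ A a, B b & R a b].
Proof.
move=> hc he hK hyp.
pose S (V : set G) := [set z | exists a b, [/\ lmul_set mul z V a, lmul_set mul z V b & R a b]].
have FF : Filter (filter_from (nbhs e) S).
  apply: filter_from_filter; first by exists setT; exact: filterT.
  move=> V W hV hW; exists (V `&` W); first exact: filterI.
  move=> z [a [b [[v [Vv Wv] <-] [v' [Vv' Wv'] <-] Rab]]]; split.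
    by exists (mul z v), (mul z v'); split => //; [exists v|exists v'].
  by exists (mul z v), (mul z v'); split => //; [exists v|exists v'].
have PF : ProperFilter (filter_from (nbhs e) S).
  apply: filter_from_proper => V hV.
  by have [z [a [b H]]] := hyp V hV; exists z, a, b.
have [z [_ cz]] := hK _ PF filterT.
exists z => A B hA hB.
rewrite -(he z) in hA hB.
have [U1 [U2 [hU1 hU2 sA]]] := @mul_split G mul z e _ hc hA.
have [W1 [W2 [hW1 hW2 sB]]] := @mul_split G mul z e _ hc hB.
have := cz (S (U2 `&` W2)) (U1 `&` W1).
case.
- by exists (U2 `&` W2) => //; exact: filterI.
- exact: filterI.
move=> z' [[a [b [[v [Uv Wv] <-] [v' [Uv' Wv'] <-] Rab]]] [U1z W1z]].
exists (mul z' v), (mul z' v'); split => //.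
  exact: sA.
exact: sB.
Qed.

Lemma iter_fix (G : Type) (f : G -> G) p n : f p = p -> iter n f p = p.
Proof. by move=> fp; elim: n => //= n ->. Qed.

Theorem theorem14 (G : topologicalType) (mul : G -> G -> G) (e : G)
  (f : G -> G) :
  topological_monoid mul e ->
  hausdorff_space G ->
  compact [set: G] ->
  continuous f ->
  (forall (x y : G) (V : set G), nbhs e V ->
     exists (z : G) (n : nat),
       lmul_set mul z V (iter n f x) /\ lmul_set mul z V (iter n f y)) ->
  exists! p : G, f p = p.
Proof.
move=> [_ _ he hc] hH hK hf hyp.
have [z hz] : exists z : G, forall A B : set G, nbhs z A -> nbhs z B ->
      exists a b, [/\ A a, B b & b = f a].
  apply: (@key G mul e (fun a b => b = f a) hc he hK) => V hV.
  have [z [n [h1 h2]]] := hyp e (f e) V hV.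
  exists z, (iter n f e), (iter n f (f e)); split => //.
  by rewrite -iterSr.
have fz : f z = z.
  apply: hH => A B hA hB.
  have hA' : nbhs z (B `&` f @^-1` A) by apply: filterI => //; exact: hf.
  have [a [b [[Ba Aa] Bb Rab]]] := hz _ _ hA' hB.
  by exists (f a); split => //; rewrite -Rab.
have uniq : forall p q, f p = p -> f q = q -> p = q.
  move=> p q fp fq.
  have [w hw] : exists w : G, forall A B : set G, nbhs w A -> nbhs w B ->
      exists a b, [/\ A a, B b & a = p /\ b = q].
    apply: (@key G mul e (fun a b => a = p /\ b = q) hc he hK) => V hV.
    have [z' [n [h1 h2]]] := hyp p q V hV.
    exists z', p, q; split => //.
      by move: h1; rewrite (@iter_fix _ _ _ n fp).
    by move: h2; rewrite (@iter_fix _ _ _ n fq).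
  have wp : w = p.
    apply: hH => A B hA hB; exists p; split; last exact: nbhs_singleton.
    by have [a [b [Aa _ [<- _]]]] := hw _ _ hA hA.
  have wq : w = q.
    apply: hH => A B hA hB; exists q; split; last exact: nbhs_singleton.
    by have [a [b [_ Bb [_ <-]]]] := hw _ _ hA hA.
  by rewrite -wp -wq.
exists z; split => // q fq.
exact: uniq.
Qed.
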